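(* Let $K>0$, $S=1/K$, let $\eta:(0,K]\to[0,\infty)$ with $\eta(K)=0$, set $\phi(k)=k\eta(k)$ ($\phi(0)=0$) and $\theta(s)=\eta(1/s)$ for $s\ge S$, and let $\Psi:\mathbb{R}^3\to\mathbb{R}$ be arbitrary. Let $\Delta t,\Delta N>0$ satisfy $$\frac{\Delta N}{\Delta t}\ge\sup_{k\in[0,K)}\frac{\phi(k)}{1-k/K}.$$ Consider vehicles $N$ with leaders $N-\Delta N$, where the first (lead) vehicle follows a prescribed trajectory that is non-decreasing in time, and every other vehicle has arbitrary initial speed and is updated by $$X_t(t+\Delta t,N)=\max\Big\{0,\ \min\Big\{\theta\Big(\tfrac{X(t,N-\Delta N)-X(t,N)}{\Delta N}\Big),\ X_t(t,N)+\Delta t\,A(t,N)\Big\}\Big\},$$ $$X(t+\Delta t,N)=\max\Big\{X(t,N),\ \min\Big\{X(t,N)+\Delta t\,\theta\Big(\tfrac{X(t,N-\Delta N)-X(t,N)}{\Delta N}\Big),\ X(t,N)+\Delta t\,X_t(t,N)+\Delta t^2A(t,N)\Big\}\Big\},$$ with $$A(t,N)=\Psi\Big(X_t(t,N),\ \tfrac{X(t,N-\Delta N)-X(t,N)}{\Delta N},\ \tfrac{X_t(t,N)-X_t(t,N-\Delta N)}{\Delta N}\Big).$$ If initially all spacings satisfy $X(0,N-\Delta N)-X(0,N)\ge S\Delta N$, then the model is forward-traveling and collision-free: for all time steps, $X_t(t+\Delta t,N)\ge 0$ and $X(t,N-\Delta N)-X(t,N)\ge S\Delta N$ for every following vehicle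 $N$.
   Context: This is the car-following form of a general second-order traffic model $v_t+vv_x=\Psi(v,1/k,v_x/k)$ after a correction that caps the acceleration. $X(t,N)$ is the location and $X_t(t,N)$ the speed at time $t$ of vehicle $N$; $\eta$ is the speed-density relation, $\phi$ the flow-density relation, $\theta$ the speed-spacing relation, $K$ the jam density, $S$ the jam spacing. Forward-traveling means speeds are never negative; collision-free means spacings never fall below $S\Delta N$. *)

(* Defs.v *)
From Stdlib Require Import Reals.
Open Scope R_scope.

(* Speed-spacing relation theta(s) = eta(1/s) (meaningful for s >= S = 1/K). *)
Definition theta (eta : R -> R) (s : R) : R := eta (/ s).

Definition phi (eta : R -> R) (k : R) : R := k * eta k.

(* Trajectories: X n i = position, V n i = speed of vehicle i at time n*dt.
   Vehicle 0 is the lead vehicle; vehicle i+1 has leader i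
   (labels N = N0 - i*dN). *)

Definition accel (Psi : R -> R -> R -> R) (dN : R)
  (X V : nat -> nat -> R) (n i : nat) : R :=
  Psi (V n (S i)) ((X n i - X n (S i)) / dN) ((V n (S i) - V n i) / dN).

Definition speed_update (eta : R -> R) (Psi : R -> R -> R -> R) (dt dN : R)
  (X V : nat -> nat -> R) (n i : nat) : R :=
  Rmax 0 (Rmin (theta eta ((X n i - X n (S i)) / dN))
               (V n (S i) + dt * accel Psi dN X V n i)).

Definition pos_update (eta : R -> R) (Psi : R -> R -> R -> R) (dt dN : R)
  (X V : nat -> nat -> R) (n i : nat) : R :=
  Rmax (X n (S i))
       (Rmin (X n (S i) + dt * theta eta ((X n i - X n (S i)) / dN))
             (X n (S i) + dt * V n (S i) + dt ^ 2 * accel Psi dN X V n i)).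

(* Main.v *)
Require Import Defs.
From Stdlib Require Import Reals Lra.
Open Scope R_scope.

Lemma key (K : R) (eta : R -> R) (dt dN : R)
  (hK : 0 < K)
  (heta_nonneg : forall k, 0 < k <= K -> 0 <= eta k)
  (heta_K : eta K = 0)
  (hdt : 0 < dt) (hdN : 0 < dN)
  (hcfl : forall k, 0 <= k < K ->
            phi eta k / (1 - k / K) <= dN / dt)
  (a : R) (ha : a >= / K * dN) :
  0 <= theta eta (a / dN) /\ dt * theta eta (a / dN) <= a - / K * dN.
Proof.
  assert (hKi : 0 < / K) by (apply Rinv_0_lt_compat; lra).
  assert (hpa : 0 < a) by nra.
  unfold theta.
  assert (Hk : / (a / dN) = dN / a) by (field; lra).
  rewrite Hk.
  set (k := dN / a).
  assert (hk0 : 0 < k) by (unfold k; apply Rdiv_lt_0_compat; lra).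
  assert (hkK : k <= K).
  { unfold k. apply (Rmult_le_reg_r a); [lra|].
    replace (dN / a * a) with dN by (field; lra).
    replace dN with (K * (/ K * dN)) at 1 by (field; lra).
    apply Rmult_le_compat_l; lra. }
  assert (he : 0 <= eta k) by (apply heta_nonneg; lra).
  split; [exact he|].
  destruct (Req_dec k K) as [E|E].
  - rewrite E, heta_K. nra.
  - assert (hkK' : k < K) by lra.
    specialize (hcfl k (conj (Rlt_le _ _ hk0) hkK')).
    unfold phi in hcfl.
    set (c := 1 - k / K) in hcfl.
    assert (hc : 0 < c).
    { unfold c. assert (k / K < 1).
      { apply (Rmult_lt_reg_r K); [lra|]. replace (k / K * K) with k by (field; lra). lra. }
      lra. }
    assert (H1 : k * eta k <= dN / dt * c).
    { apply (Rmult_le_compat_r c) in hcfl; [|lra].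
      replace (k * eta k / c * c) with (k * eta k) in hcfl by (field; lra). exact hcfl. }
    assert (H2 : dt * (k * eta k) <= dN * c).
    { apply (Rmult_le_compat_l dt) in H1; [|lra].
      replace (dt * (dN / dt * c)) with (dN * c) in H1 by (field; lra). exact H1. }
    assert (H3 : dt * (k * eta k) * (a / dN) <= dN * c * (a / dN)).
    { apply Rmult_le_compat_r; [|exact H2]. apply Rlt_le, Rdiv_lt_0_compat; lra. }
    replace (dt * (k * eta k) * (a / dN)) with (dt * eta k) in H3
      by (unfold k; field; lra).
    replace (dN * c * (a / dN)) with (a - / K * dN) in H3
      by (unfold c, k; field; lra).
    exact H3.
Qed.

Theorem theorem6p1
  (K : R) (eta : R -> R) (Psi : R -> R -> R -> R) (dt dN : R)
  (X V : nat -> nat -> R)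
  (hK : 0 < K)
  (heta_nonneg : forall k, 0 < k <= K -> 0 <= eta k)
  (heta_K : eta K = 0)
  (hdt : 0 < dt) (hdN : 0 < dN)
  (* dN/dt >= sup_{k in [0,K)} phi(k)/(1-k/K); phi(0)=0*eta 0=0 *)
  (hcfl : forall k, 0 <= k < K ->
            phi eta k / (1 - k / K) <= dN / dt)
  (* lead vehicle: prescribed trajectory, non-decreasing in time *)
  (hlead : forall n, X n 0%nat <= X (S n) 0%nat)
  (* followers: update rules *)
  (hV : forall n i, V (S n) (S i) = speed_update eta Psi dt dN X V n i)
  (hX : forall n i, X (S n) (S i) = pos_update eta Psi dt dN X V n i)
  (* initial spacings *)
  (hinit : forall i, X 0%nat i - X 0%nat (S i) >= (/ K) * dN) :
  forall n i,
    0 <= V (S n) (S i) /\ X n i - X n (S i) >= (/ K) * dN.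
Proof.
  assert (Hmono : forall n i, X n i <= X (S n) i).
  { intros n [|j]; [apply hlead|]. rewrite hX. unfold pos_update. apply Rmax_l. }
  assert (Hsp : forall n i, X n i - X n (S i) >= (/ K) * dN).
  { induction n as [|n IH]; intros i; [apply hinit|].
    destruct (key K eta dt dN hK heta_nonneg heta_K hdt hdN hcfl
                (X n i - X n (S i)) (IH i)) as [h0 h1].
    specialize (Hmono n i).
    rewrite (hX n i). unfold pos_update.
    set (th := theta eta ((X n i - X n (S i)) / dN)) in *.
    set (m := Rmin _ _).
    assert (hm : m <= X n (S i) + dt * th) by apply Rmin_l.
    assert (hmx : Rmax (X n (S i)) m <= X n (S i) + dt * th).
    { apply Rmax_lub; nra. }
    lra. }
  intros n i; split; [|apply Hsp].
  rewrite hV. unfold speed_update. apply Rmax_l.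
Qed.
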